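(* Let $t'$ be a feasible type report profile, let buyer $m$ be the winner under efficient allocation, and let $LCC_m=(l_1,l_2,\dots,l_q=m)$. Let $l_i\in LCC_m$ be an intermediate node. If, when $l_i$'s report changes from $r'_{l_i}$ to $r'_{l_i}\setminus {r^*_{l_i}}'$, the winner under efficient allocation becomes a buyer $m'\ne m$, then $\{l_{i+1},l_{i+2},\dots,l_q\}\cap LCC_{m'}=\emptyset$, where $LCC_{m'}$ is the lowest-cost trading chain to $m'$ under the modified profile.
   Context: Setting. A seller $s$ sells one indivisible commodity. Besides $s$, there is a set $N$ of agents, each either a buyer or an intermediate node. Each buyer $i$ reports a bid $b'_i\ge 0$. Each intermediate node $i$ has a neighbour set $r_i\subseteq N$, reports $r'_i\subseteq r_i$ (the agents to whom she passes the sale information), and has a publicly known cost $c_i$ incurred if a trade passes through her. Buyers have no links among themselves. Initially only the seller's neighbours $r_s$ know of the sale. A trading chain from $s$ to $i$ under reports $t'$ is a simple path $(a_1,\dots,a_p,i)$ with $a_1\in r_s$, $a_l\in r'_{a_{l-1}}$ for $1<l\le p$, $i\in r'_{a_p}$. A report profile is feasible if exactly the agents reachable from $s$ by trading chains (following the others' reports) participate; when an agent changes her report the others' profile adjusts to stay feasible. $LCC_i$ is a trading chain from $s$ to $i$ minimizing the total cost of the intermediate nodes on it other than $i$. For a buyer $i$, $SW_i=b'_i-\sum_{j\in LCC_i\setminus\{i\}}c_j$. The winner under efficient allocation is $m=\arg\max_i SW_i$, and the item is traded along $LCC_m$. Threshold neighbourhood. For an intermediate node $i$, ${r_i^*}'$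 is a minimum-cardinality subset $r''\subseteq r'_i$ such that, when $i$ reports $r'_i\setminus r''$ instead of $r'_i$, the winner under efficient allocation changes to a buyer other than $m$; if no such subset exists, ${r_i^*}'=r'_i$. *)

(* Defs.v *)
From mathcomp Require Import all_boot all_order all_algebra.
Set Implicit Arguments. Unset Strict Implicit. Unset Printing Implicit Defensive.
Import Order.TTheory GRing.Theory Num.Theory.
Local Open Scope ring_scope.

(* Agents N are the elements of the finite type V; the seller s is not an
   element of V and is represented only through her neighbour set rs.
   [buyer] marks buyers; the other agents are intermediate nodes.
   A neighbour-report profile is [rep : V -> {set V}]; only intermediate
   nodes pass on information (buyers have no outgoing links). *)

Section Network.
Variables (V : finType) (R : realDomainType).
Variable buyer : pred V.
Variable rs : {set V}.

Definition edge (rep : V -> {set V}) : rel V :=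
  fun x y => ~~ buyer x && (y \in rep x).

Definition trading_chain (rep : V -> {set V}) (p : seq V) (i : V) : bool :=
  match p with
  | [::] => false
  | x :: q => [&& uniq p, x \in rs, path (edge rep) x q & last x q == i]
  end.

Definition chain_cost (c : V -> R) (p : seq V) (i : V) : R :=
  \sum_(j <- p | j != i) c j.

Definition is_LCC (rep : V -> {set V}) (c : V -> R) (p : seq V) (i : V) : Prop :=
  trading_chain rep p i /\
  forall q, trading_chain rep q i -> chain_cost c p i <= chain_cost c q i.

Definition SW (b c : V -> R) (p : seq V) (i : V) : R := b i - chain_cost c p i.

Definition is_winner (rep : V -> {set V}) (b c : V -> R) (prio : V -> nat)
  (m : V) : Prop :=
  buyer m /\ exists pm, is_LCC rep c pm m /\
    forall j pj, buyer j -> j != m -> is_LCC rep c pj j ->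
      SW b c pj j < SW b c pm m \/
      (SW b c pj j = SW b c pm m /\ (prio m < prio j)%N).

Definition upd (rep : V -> {set V}) (i : V) (S : {set V}) : V -> {set V} :=
  fun j => if j == i then S else rep j.

Definition changes_winner (rep : V -> {set V}) (b c : V -> R) (prio : V -> nat)
  (i m : V) (r'' : {set V}) : Prop :=
  r'' \subset rep i /\
  exists m', m' != m /\ is_winner (upd rep i (rep i :\: r'')) b c prio m'.

Definition is_threshold (rep : V -> {set V}) (b c : V -> R) (prio : V -> nat)
  (i m : V) (rstar : {set V}) : Prop :=
  (changes_winner rep b c prio i m rstar /\
     forall r'', changes_winner rep b c prio i m r'' -> (#|rstar| <= #|r''|)%N)
  \/ ((forall r'', ~ changes_winner rep b c prio i m r'') /\ rstar = rep i).

End Network.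

(* Main.v *)
Require Import Defs.
From mathcomp Require Import all_boot all_order all_algebra.
From mathcomp Require Import lra.
Import Order.TTheory GRing.Theory Num.Theory.
Local Open Scope ring_scope.

Section Helpers.
Local Set Implicit Arguments.
Local Unset Strict Implicit.
Variables (V : finType) (R : realDomainType).
Variable buyer : pred V.
Variable rs : {set V}.

Lemma list_min (T : eqType) (s : seq T) (f : T -> R) :
  s != [::] -> exists2 x, x \in s & forall y, y \in s -> f x <= f y.
Proof.
elim: s => // a s IH _.
case: (eqVneq s [::]) => [->|sne].
  by exists a; rewrite ?mem_head // => y; rewrite inE => /eqP ->.
have [x xs hx] := IH sne.
case: (leP (f a) (f x)) => hax.
  exists a; first exact: mem_head.
  move=> y; rewrite inE => /orP [/eqP ->//|ys].
  exact: le_trans hax (hx _ ys).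
exists x; first by rewrite inE xs orbT.
move=> y; rewrite inE => /orP [/eqP ->|ys]; last exact: hx.
exact: ltW.
Qed.

Lemma sum_sub_uniq (s t : seq V) (g : V -> R) :
  uniq s -> {subset s <= t} -> (forall y, y \in t -> 0 <= g y) ->
  \sum_(y <- s) g y <= \sum_(y <- t) g y.
Proof.
elim: t s => [|a t IH] s us sst hg.
  by case: s us sst => [|z s] //= _ /(_ z); rewrite mem_head => /(_ isT).
rewrite big_cons.
case: (boolP (a \in s)) => as_.
  rewrite (perm_big _ (perm_to_rem as_)) big_cons lerD2l.
  apply: IH.
  - by apply: rem_uniq.
  - move=> y yr.
    have ys : y \in s by apply: (mem_rem yr).
    have := sst y ys; rewrite inE => /orP [/eqP ya|//].
    move: yr; rewrite ya; rewrite (rem_filter _ us) mem_filter /= eqxx //.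
  - by move=> y yt; apply: hg; rewrite inE yt orbT.
rewrite -[X in X <= _]add0r; apply: lerD; first by apply: hg; exact: mem_head.
apply: IH => //; last by move=> y yt; apply: hg; rewrite inE yt orbT.
move=> y ys; have := sst y ys; rewrite inE => /orP [/eqP ya|//].
by move: as_; rewrite -ya ys.
Qed.

Lemma lcc_exists (rep : V -> {set V}) (c : V -> R) q j :
  trading_chain buyer rs rep q j -> exists p, is_LCC buyer rs rep c p j.
Proof.
move=> hq.
pose all_s := flatten (map (fun A : {set V} => permutations (enum A)) (enum [set: {set V}])).
pose cands := [seq s <- all_s | trading_chain buyer rs rep s j].
have qin : q \in cands.
  rewrite mem_filter hq /=; apply/flattenP.
  exists (permutations (enum [set y in q])).
    by apply/mapP; exists [set y in q]; rewrite ?mem_enum ?in_setT.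
  rewrite mem_permutations; apply: uniq_perm; last first.
  - by move=> y; rewrite mem_enum inE.
  - exact: enum_uniq.
  by case: q hq => // x q /and4P [].
have cne : cands != [::] by case: cands qin.
have [p pin hp] := list_min (fun s => chain_cost c s j) cne.
exists p; split; first by move: pin; rewrite mem_filter => /andP [].
move=> q' hq'; apply: hp.
rewrite mem_filter hq' /=; apply/flattenP.
exists (permutations (enum [set y in q'])).
  by apply/mapP; exists [set y in q']; rewrite ?mem_enum ?in_setT.
rewrite mem_permutations; apply: uniq_perm; last first.
- by move=> y; rewrite mem_enum inE.
- exact: enum_uniq.
by case: q' hq' => // x q' /and4P [].
Qed.

Lemma path_nonbuyer rep h w y : path (edge buyer rep) h w -> y \in h :: w ->
  y != last h w -> ~~ buyer y.
Proof.
elim: w h => [|a w IH] h /=.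
  by rewrite inE => _ /eqP ->; rewrite eqxx.
move=> /andP [/andP [hb _] pw]; rewrite inE => /orP [/eqP -> //|yw] yl.
exact: IH pw yw yl.
Qed.

Lemma walk_chain rep (c : V -> R) h w j : h \in rs -> path (edge buyer rep) h w ->
  last h w = j -> (forall y, ~~ buyer y -> 0 <= c y) ->
  exists p, trading_chain buyer rs rep p j /\
    chain_cost c p j <= \sum_(y <- h :: w | y != j) c y.
Proof.
move=> hrs hp <- cge.
have hnb := path_nonbuyer hp.
case/shortenP: hp hnb => p' hp' up' sub hnb.
exists (h :: p'); split; first by rewrite /trading_chain up' hrs hp' eqxx.
rewrite /chain_cost [X in X <= _]big_mkcond [X in _ <= X]big_mkcond /=.
apply: (sum_sub_uniq (g := fun y => if y != last h p' then c y else 0)) => //.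
  move=> y; rewrite !inE => /orP [->//|/sub ->]; by rewrite orbT.
move=> y yw; case: ifP => // yl; apply: cge; apply: hnb yw _; by rewrite yl.
Qed.

Lemma win_bound rep b (c : V -> R) prio m pm j q :
  is_winner buyer rs rep b c prio m -> is_LCC buyer rs rep c pm m ->
  buyer j -> j != m -> trading_chain buyer rs rep q j ->
  (b j - chain_cost c q j < b m - chain_cost c pm m) \/
  (b j - chain_cost c q j <= b m - chain_cost c pm m /\ (prio m < prio j)%N).
Proof.
move=> [_ [pm0 [[tc0 h0] hw]]] [tc hpm] bj jm tq.
have [pj [tj hj]] := lcc_exists c tq.
have e1 : chain_cost c pm0 m = chain_cost c pm m.
  by apply/le_anti; rewrite h0 ?hpm.
have e2 := hj q tq.
case: (hw j pj bj jm (conj tj hj)) => [h|[h hp]]; move: h; rewrite /SW -e1 => h.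
  by left; lra.
by right; split => //; lra.
Qed.

Definition pre rep (l : seq V) x := match l with
  | [::] => x \in rs
  | a :: l0 => (a \in rs) && path (edge buyer rep) a (rcons l0 x) end.

Lemma tc_split rep l x r j : trading_chain buyer rs rep (l ++ x :: r) j =
  [&& uniq (l ++ x :: r), pre rep l x, path (edge buyer rep) x r & last x r == j].
Proof.
case: l => [|a l] //=.
rewrite cat_path rcons_path last_cat /=.
by rewrite !andbA.
Qed.

Lemma pre_nonbuyer rep l x : pre rep l x -> forall y, y \in l -> ~~ buyer y.
Proof.
case: l => [|a l] //= /andP [_ hp] y yl.
suff : forall a, path (edge buyer rep) a (rcons l x) -> y \in a :: l -> ~~ buyer y.
  by move=> H; apply: H hp yl.
elim: l {hp yl} => [|d l IH] a' /=.
  by move=> /andP [/andP [hb _] _]; rewrite inE => /eqP ->.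
move=> /andP [/andP [hb _] pw]; rewrite inE => /orP [/eqP -> //|yw].
exact: IH pw yw.
Qed.

Lemma pre_walk rep (c : V -> R) l x r j : pre rep l x -> path (edge buyer rep) x r ->
  last x r = j -> (forall y, ~~ buyer y -> 0 <= c y) ->
  exists p, trading_chain buyer rs rep p j /\ chain_cost c p j <= \sum_(y <- l ++ x :: r | y != j) c y.
Proof.
case: l => [|a l] /=; first exact: walk_chain.
move=> /andP [ha hp] hr hl cge; apply: walk_chain => //.
  by move: hp; rewrite rcons_path cat_path /= hr => /andP [-> ->].
by rewrite last_cat.
Qed.

Lemma pre_sub rep rep' l x : subrel (edge buyer rep) (edge buyer rep') ->
  pre rep l x -> pre rep' l x.
Proof.
case: l => [|a l] //= hs /andP [-> hp] /=; exact: sub_path hp.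
Qed.

Lemma sum_nonbuyer (c : V -> R) (l : seq V) j : (forall z, z \in l -> ~~ buyer z) ->
  buyer j -> \sum_(z <- l | z != j) c z = \sum_(z <- l) c z.
Proof.
move=> hl bj; rewrite big_seq_cond [RHS]big_seq; apply: eq_bigl => z.
case: (boolP (z \in l)) => //= zl; apply/eqP => zj.
by move: (hl z zl); rewrite zj bj.
Qed.


Lemma arith_a (bm bm' Q1 Q2 A A' B B' : R) : Q1 <= A' + B -> Q2 <= A + B' ->
  bm' - Q2 < bm - (A + B) -> bm - Q1 <= bm' - (A' + B') -> False.
Proof. move=> *; lra. Qed.

Lemma arith_b (bm bm' Q1 Q2 A A' B B' : R) : Q1 <= A' + B -> Q2 <= A + B' ->
  bm' - Q2 <= bm - (A + B) -> bm - Q1 < bm' - (A' + B') -> False.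
Proof. move=> *; lra. Qed.

End Helpers.
Theorem lemma1 (V : finType) (R : realDomainType) (buyer : pred V)
  (rs : {set V}) (r rep : V -> {set V}) (b c : V -> R) (prio : V -> nat)
  (prio_inj : injective prio)
  (b_ge0 : forall i, buyer i -> 0 <= b i)
  (c_ge0 : forall i, ~~ buyer i -> 0 <= c i)
  (rep_sub : forall i, rep i \subset r i)
  (m : V) (hm : is_winner buyer rs rep b c prio m)
  (pm : seq V) (hpm : is_LCC buyer rs rep c pm m)
  (k : nat) (hk : (k < (size pm).-1)%N)
  (rstar : {set V})
  (hth : is_threshold buyer rs rep b c prio (nth m pm k) m rstar)
  (m' : V) (hm'm : m' != m)
  (hm' : is_winner buyer rs (upd rep (nth m pm k) (rep (nth m pm k) :\: rstar))
           b c prio m')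
  (pm' : seq V)
  (hpm' : is_LCC buyer rs (upd rep (nth m pm k) (rep (nth m pm k) :\: rstar))
            c pm' m') :
  [set x in drop k.+1 pm] :&: [set x in pm'] = set0.
Proof.
have splitx : forall (s : seq V) x, x \in s ->
    s = take (index x s) s ++ x :: drop (index x s).+1 s.
  move=> s x xs.
  by rewrite -{1}(cat_take_drop (index x s) s) (drop_nth x) ?index_mem // nth_index.
set i := nth m pm k.
set rep' := upd rep i (rep i :\: rstar).
apply/setP => y; rewrite !inE; apply/negbTE/negP => /andP [yd yp'].
have ypm : y \in pm by apply: mem_drop yd.
have [tc hlcc] := hpm.
have [tc' hlcc'] := hpm'.
have upm : uniq pm by case: (pm) tc => // ? ? /and4P [].
have Epm := splitx _ _ ypm; have Epm' := splitx _ _ yp'.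
set l := take (index y pm) pm in Epm; set rr := drop (index y pm).+1 pm in Epm.
set l' := take (index y pm') pm' in Epm'; set rr' := drop (index y pm').+1 pm' in Epm'.
have kl : (k < size l)%N.
  have ynt : y \notin take k.+1 pm.
    move: upm; rewrite -{1}(cat_take_drop k.+1 pm) cat_uniq => /and3P [_ hh _].
    by apply/negP => yt; move/hasP: hh; apply; exists y.
  rewrite /l size_take index_mem ypm -(cat_take_drop k.+1 pm) index_cat (negbTE ynt) size_take.
  have -> : (k.+1 < size pm)%N by move: hk; case: (size pm) => // n; rewrite ltnS.
  by rewrite leq_addr.
have il : i \in l by rewrite /i Epm nth_cat kl mem_nth.
have := tc; rewrite Epm tc_split => /and4P [upm2 prel pr lr].
have := tc'; rewrite Epm' tc_split => /and4P [upm2' prel' pr' lr'].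
have ir : forall z, z \in y :: rr -> z != i.
  move=> z zr; apply/eqP => zi; move: upm2; rewrite cat_uniq => /and3P [_ hh _].
  by move/hasP: hh; apply; exists z; rewrite // zi.
have sub' : subrel (edge buyer rep') (edge buyer rep).
  move=> u v; rewrite /edge /rep' /upd; case: eqP => [->|//].
  by rewrite in_setD => /andP [-> /andP [_ ->]].
have pr2 : path (edge buyer rep') y rr.
  apply: (sub_in_path (P := predC1 i)) pr; last by apply/allP => z /ir.
  by move=> u v /= ui _; rewrite /edge /rep' /upd (negbTE ui).
have [q1 [tq1 cq1]] := pre_walk (c := c) prel' pr2 (eqP lr) c_ge0.
have [q2 [tq2 cq2]] := pre_walk (c := c) prel (sub_path sub' pr') (eqP lr') c_ge0.
have bm := hm.1; have bm' := hm'.1.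
have lnb := pre_nonbuyer prel; have lnb' := pre_nonbuyer prel'.
have {}cq1 : chain_cost c q1 m <= \sum_(z <- l') c z + \sum_(z <- y :: rr | z != m) c z.
  by rewrite -(sum_nonbuyer c lnb' bm) -big_cat.
have {}cq2 : chain_cost c q2 m' <= \sum_(z <- l) c z + \sum_(z <- y :: rr' | z != m') c z.
  by rewrite -(sum_nonbuyer c lnb bm') -big_cat.
have e1 : chain_cost c pm m = \sum_(z <- l) c z + \sum_(z <- y :: rr | z != m) c z.
  by rewrite /chain_cost {1}Epm big_cat /= (sum_nonbuyer c lnb bm).
have e2 : chain_cost c pm' m' = \sum_(z <- l') c z + \sum_(z <- y :: rr' | z != m') c z.
  by rewrite /chain_cost {1}Epm' big_cat /= (sum_nonbuyer c lnb' bm').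
have w1 := win_bound hm hpm bm' hm'm tq2.
have mm' : m != m' by rewrite eq_sym.
have w2 := win_bound hm' hpm' bm mm' tq1.
rewrite e1 in w1; rewrite e2 in w2.
case: w1 => [w1|[w1 p1]]; case: w2 => [w2|[w2 p2]].
- exact: arith_a cq1 cq2 w1 (ltW w2).
- exact: arith_a cq1 cq2 w1 w2.
- exact: arith_b cq1 cq2 w1 w2.
- by move: (ltn_trans p1 p2); rewrite ltnn.
Qed.
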